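(* A finite word is LSP if and only if it is a prefix of an infinite LSP word.
   Context: A finite word $u$ is a left special factor of a (finite or infinite) word $w$ if there are distinct letters $x\neq y$ such that $xu$ and $yu$ are factors of $w$. A word is LSP if every left special factor of it is a prefix of it. Words are over a finite alphabet. *)

(* Defs.v *)
From mathcomp Require Import all_boot.
Set Implicit Arguments. Unset Strict Implicit. Unset Printing Implicit Defensive.

Definition factor_inf (A : finType) (u : seq A) (x : nat -> A) : Prop :=
  exists i : nat, u = mkseq (fun k => x (i + k)) (size u).

Definition prefix_inf (A : finType) (u : seq A) (x : nat -> A) : Prop :=
  u = mkseq x (size u).

Definition left_special_fin (A : finType) (u w : seq A) : Prop :=
  exists a b : A, a != b /\ infix (a :: u) w /\ infix (b :: u) w.

Definition left_special_inf (A : finType) (u : seq A) (x : nat -> A) : Prop :=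
  exists a b : A, a != b /\ factor_inf (a :: u) x /\ factor_inf (b :: u) x.

Definition LSP_fin (A : finType) (w : seq A) : Prop :=
  forall u : seq A, left_special_fin u w -> prefix u w.

Definition LSP_inf (A : finType) (x : nat -> A) : Prop :=
  forall u : seq A, left_special_inf u x -> prefix_inf u x.

(* Main.v *)
Require Import Defs.
From mathcomp Require Import all_boot zify.
Set Implicit Arguments. Unset Strict Implicit. Unset Printing Implicit Defensive.

Ltac slia :=
  repeat match goal with H : ?P |- _ => match type of P with Prop => revert H end end;
  repeat match goal with |- context [@size ?T ?x] => let n := fresh "sz" in set n := @size T x; clearbody n end;
  intros; lia.

Definition occ (A : finType) (c0 : A) (s w : seq A) i :=
  i + size s <= size w /\ forall k, k < size s -> nth c0 s k = nth c0 w (i + k).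

Lemma infix_occ (A : finType) (c0 : A) (s w : seq A) : infix s w <-> exists i, occ c0 s w i.
Proof.
split.
  move/infixP=> [p [q ->]]; exists (size p); split.
    by rewrite !size_cat leq_add2l leq_addr.
  by move=> k hk; rewrite nth_cat ltnNge leq_addr /= addKn nth_cat hk.
move=> [i [hb hn]]; apply/infixP.
have E : take (size s) (drop i w) = s.
  apply: (@eq_from_nth _ c0).
    rewrite size_take size_drop; case: ltnP => // h; slia.
  move=> k; rewrite size_take size_drop => hk.
  have hk' : k < size s by move: hk; case: (ltnP (size s) (size w - i)) => // h; slia.
  by rewrite nth_take // nth_drop hn.
exists (take i w), (drop (size s) (drop i w)).
by rewrite -{1}E !cat_take_drop.
Qed.

Lemma prefix_occ (A : finType) (c0 : A) (s w : seq A) : prefix s w <-> occ c0 s w 0.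
Proof.
split.
  move/prefixP=> [q ->]; split; first by rewrite size_cat leq_addr.
  by move=> k hk; rewrite add0n nth_cat hk.
move=> [hb hn]; rewrite prefixE; apply/eqP.
apply: (@eq_from_nth _ c0).
  by rewrite size_take; case: ltnP => // h; slia.
move=> k; rewrite size_take => hk.
have hk' : k < size s by move: hk; case: (ltnP (size s) (size w)) => // h; slia.
by rewrite nth_take // hn.
Qed.

Definition bd (A : finType) (c0 : A) (w : seq A) (l : nat) :=
  [forall q : 'I_l, nth c0 w q == nth c0 w (size w - l + q)].

Definition blen (A : finType) (c0 : A) (w : seq A) :=
  \max_(i < size w | bd c0 w i) i.

Definition ext (A : finType) (c0 : A) (w : seq A) := nth c0 w (blen c0 w).

Lemma bdP (A : finType) (c0 : A) w l :
  reflect (forall q, q < l -> nth c0 w q = nth c0 w (size w - l + q)) (bd c0 w l).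
Proof.
apply: (iffP forallP) => [H q hq | H q].
  by have /eqP := H (Ordinal hq).
by apply/eqP; apply: H.
Qed.

Lemma blen_max (A : finType) (c0 : A) w l :
  l < size w -> bd c0 w l -> l <= blen c0 w.
Proof.
move=> hl hb; rewrite /blen.
exact: (@leq_bigmax_cond _ (fun i : 'I_(size w) => bd c0 w i) (fun i => nat_of_ord i) (Ordinal hl)).
Qed.

Lemma blen_bd (A : finType) (c0 : A) w :
  0 < size w -> blen c0 w < size w /\ bd c0 w (blen c0 w).
Proof.
move=> hw; rewrite /blen.
have hA : #|[pred i : 'I_(size w) | bd c0 w i]| > 0.
  apply/card_gt0P; exists (Ordinal hw); rewrite inE /=.
  by apply/bdP.
have [i0 hi0 ->] := eq_bigmax_cond (fun i : 'I_(size w) => nat_of_ord i) hA.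
by split; [exact: ltn_ord | exact: hi0].
Qed.

Lemma nthW_in (A : finType) (c0 c : A) (w : seq A) n :
  n < size w -> nth c0 (rcons w c) n = nth c0 w n.
Proof. by move=> h; rewrite nth_rcons h. Qed.

Lemma nthW_last (A : finType) (c0 c : A) (w : seq A) n :
  n = size w -> nth c0 (rcons w c) n = c.
Proof. by move=> ->; rewrite nth_rcons ltnn eqxx. Qed.

Lemma occ_rcons_in (A : finType) (c0 c : A) (s w : seq A) i :
  occ c0 s (rcons w c) i -> i + size s <= size w -> occ c0 s w i.
Proof.
move=> [hb hn] h; split => // k hk; rewrite hn // nthW_in //; slia.
Qed.

Lemma occ_rcons_out (A : finType) (c0 c : A) (s w : seq A) i :
  occ c0 s w i -> occ c0 s (rcons w c) i.
Proof.
move=> [hb hn]; split; first by rewrite size_rcons; slia.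
move=> k hk; rewrite hn // nthW_in //; slia.
Qed.

Lemma occ_sub (A : finType) (c0 c : A) (s w : seq A) i l :
  occ c0 s (rcons w c) i -> l <= size s -> i + l <= size w -> occ c0 (take l s) w i.
Proof.
move=> [hb hn] hl h; split; first by rewrite size_takel.
move=> k; rewrite size_takel // => hk; rewrite nth_take // hn; last slia.
rewrite nthW_in //; slia.
Qed.

Lemma step (A : finType) (c0 : A) (w : seq A) :
  LSP_fin w -> LSP_fin (rcons w (ext c0 w)).
Proof.
move=> L u [a [b [ab [Ha Hb]]]].
move/(infix_occ c0): Ha => [i Hi]; move/(infix_occ c0): Hb => [j Hj].
apply/(prefix_occ c0).
set c := ext c0 w.
have Lw : forall (v : seq A) a b i j, a != b -> occ c0 (a::v) w i ->
    occ c0 (b::v) w j -> occ c0 v w 0.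
  move=> v a' b' i' j' ab' H1 H2; apply/(prefix_occ c0)/L; exists a', b'.
  by split => //; split; apply/(infix_occ c0); eexists; eauto.
have main : forall a b i j, a != b -> occ c0 (a::u) (rcons w c) i ->
    occ c0 (b::u) (rcons w c) j -> ~~ (i + size (a::u) <= size w) ->
    occ c0 u (rcons w c) 0.
  move=> {Hi Hj ab a b i j}; move=> a b i j ab HI HJ hi.
  have [Hib Hi] := HI; have [Hjb Hj] := HJ.
  rewrite size_rcons /= in Hib Hjb hi.
  have ei : i + size u = size w by slia.
  have hj : j + (size u).+1 <= size w.
    case: (ltnP (size w) (j + (size u).+1)) => // hj.
    have ej : j = i by slia.
    have ea := Hi 0 (ltn0Sn _); have eb := Hj 0 (ltn0Sn _).
    rewrite /= ej in ea eb.
    by rewrite ea eb eqxx in ab.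
  case: (posnP (size u)) => hu.
    rewrite (size0nil hu); split => //.
  have [m em] : exists m, size u = m.+1 by exists (size u).-1; slia.
  have Ht : occ c0 (a :: take m u) w i.
    have := occ_sub (l := m.+1) HI; apply; rewrite /= ?em; slia.
  have Htb : occ c0 (b :: take m u) w j.
    have := occ_sub (l := m.+1) HJ; apply; rewrite /= ?em; slia.
  have Pt := Lw _ a b i j ab Ht Htb.
  have [_ Ptn] := Pt.
  have Pt' : forall k, k < m -> nth c0 u k = nth c0 w k.
    move=> k hk; have := Ptn k; rewrite size_takel ?em // nth_take //; by apply.
  have hbd : bd c0 w m.
    apply/bdP => q hq.
    rewrite -Pt' //.
    have := Hi q.+1; rewrite /= em ltnS => ->; last slia.
    rewrite nthW_in; last slia.
    congr nth; slia.
  have hmle : m <= blen c0 w by apply: blen_max => //; slia.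
  have [hk hbk] := blen_bd c0 (w := w) ltac:(slia).
  have hc : nth c0 u m = c.
    have := Hi m.+1; rewrite /= em ltnS => ->; last slia.
    by rewrite nthW_last //; slia.
  suff hwm : nth c0 w m = c.
    split; first by rewrite size_rcons; slia.
    move=> k0 hk0; rewrite add0n nthW_in; last slia.
    case: (ltngtP k0 m) => hkm; first exact: Pt'.
      slia.
    by rewrite hkm hc hwm.
  case: (ltngtP m (blen c0 w)) => hmk; last first.
      by rewrite hmk.
    slia.
  set k := blen c0 w in hmle hk hbk hmk.
  have Hak : occ c0 (a::u) w (k - m.+1).
    split; first by rewrite /= em; slia.
    move=> idx; rewrite /= em ltnS => hidx.
    case: (ltngtP idx m.+1) => hi2.
    - rewrite Hi /=; last by rewrite em; slia.
      rewrite nthW_in; last slia.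
      move/bdP: hbk => hb2; rewrite (hb2 (k - m.+1 + idx)); last slia.
      congr nth; slia.
    - slia.
    - rewrite hi2 /= hc /c /ext; congr nth; slia.
  have Hbk : occ c0 (b::u) w j.
    by apply: occ_rcons_in HJ _; rewrite /= em; slia.
  have [_ Pu] := Lw _ a b _ _ ab Hak Hbk.
  by rewrite -hc Pu ?em.
case: (boolP (i + size (a::u) <= size w)) => hi; last exact: main a b i j ab Hi Hj hi.
case: (boolP (j + size (b::u) <= size w)) => hj.
  exact: occ_rcons_out (Lw u a b i j ab (occ_rcons_in Hi hi) (occ_rcons_in Hj hj)).
by apply: (main b a j i) => //; rewrite eq_sym.
Qed.

Definition iterw (A : finType) (c0 : A) (w : seq A) n :=
  iter n (fun s => rcons s (ext c0 s)) w.

Lemma size_iterw (A : finType) (c0 : A) (w : seq A) n :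
  size (iterw c0 w n) = size w + n.
Proof. elim: n => [|n IH] /=; first by rewrite addn0. by rewrite size_rcons IH addnS. Qed.

Lemma iterw_LSP (A : finType) (c0 : A) (w : seq A) n :
  LSP_fin w -> LSP_fin (iterw c0 w n).
Proof. move=> L; elim: n => [|n IH] //=; exact: step. Qed.

Lemma iterw_ext (A : finType) (c0 : A) (w : seq A) n m :
  n <= m -> exists s, iterw c0 w m = iterw c0 w n ++ s.
Proof.
elim: m => [|m IH] hnm.
  by exists [::]; move: hnm; rewrite leqn0 => /eqP ->; rewrite cats0.
case: (ltngtP n m.+1) hnm => // h _; last by exists [::]; rewrite h cats0.
have [s hs] := IH h.
by exists (rcons s (ext c0 (iterw c0 w m))); rewrite /= hs rcons_cat.
Qed.

Definition xw (A : finType) (c0 : A) (w : seq A) (i : nat) :=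
  nth c0 (iterw c0 w i.+1) i.

Lemma nth_iterw (A : finType) (c0 : A) (w : seq A) n i :
  i < size (iterw c0 w n) -> nth c0 (iterw c0 w n) i = xw c0 w i.
Proof.
move=> hi.
have [s1 h1] := iterw_ext c0 w (leq_maxl n i.+1).
have [s2 h2] := iterw_ext c0 w (leq_maxr n i.+1).
have hi2 : i < size (iterw c0 w i.+1) by rewrite size_iterw; slia.
have e2 : nth c0 (iterw c0 w i.+1) i = nth c0 (iterw c0 w (maxn n i.+1)) i.
  by rewrite h2 nth_cat hi2.
by rewrite /xw e2 h1 nth_cat hi.
Qed.

Lemma nth_prefix_inf (A : finType) (c0 : A) (w : seq A) (x : nat -> A) :
  prefix_inf w x -> forall k, k < size w -> nth c0 w k = x k.
Proof. by move=> P k hk; rewrite P nth_mkseq // size_mkseq. Qed.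

Lemma prefix_inf_nth (A : finType) (c0 : A) (w : seq A) (x : nat -> A) :
  (forall k, k < size w -> nth c0 w k = x k) -> prefix_inf w x.
Proof.
move=> H; apply: (@eq_from_nth _ c0); first by rewrite size_mkseq.
by move=> k hk; rewrite nth_mkseq // H.
Qed.

Lemma factor_of_occ (A : finType) (c0 : A) (s w : seq A) (x : nat -> A) i :
  (forall k, k < size w -> nth c0 w k = x k) -> occ c0 s w i -> factor_inf s x.
Proof.
move=> H [hb hn]; exists i; apply: (@eq_from_nth _ c0); first by rewrite size_mkseq.
move=> k hk; rewrite nth_mkseq // hn // H //; slia.
Qed.

Lemma occ_of_factor (A : finType) (c0 : A) (s w : seq A) (x : nat -> A) i :
  (forall k, k < size w -> nth c0 w k = x k) -> s = mkseq (fun k => x (i + k)) (size s) ->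
  i + size s <= size w -> occ c0 s w i.
Proof.
move=> H hs hb; split => // k hk.
by rewrite {1}hs nth_mkseq // H //; slia.
Qed.

Theorem lemma6 (A : finType) (hA : 0 < #|A|) (w : seq A) :
  LSP_fin w <-> exists x : nat -> A, LSP_inf x /\ prefix_inf w x.
Proof.
have [c0 _] := card_gt0P hA.
split.
  move=> L; exists (xw c0 w).
  have HN : forall N k, k < size (iterw c0 w N) -> nth c0 (iterw c0 w N) k = xw c0 w k.
    by move=> N k; apply: nth_iterw.
  split; last first.
    apply: (@prefix_inf_nth _ c0) => k hk.
    by rewrite -(nth_iterw (n := 0)).
  move=> u [a [b [ab [[i Hi] [j Hj]]]]].
  set N := i + j + size u + 1.
  have Ha : infix (a :: u) (iterw c0 w N).
    apply/(infix_occ c0); exists i; apply: (occ_of_factor (HN N)) => //.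
    by rewrite size_iterw /= /N; slia.
  have Hb : infix (b :: u) (iterw c0 w N).
    apply/(infix_occ c0); exists j; apply: (occ_of_factor (HN N)) => //.
    by rewrite size_iterw /= /N; slia.
  have /(prefix_occ c0) [hb hn] := @iterw_LSP _ c0 w N L u (ex_intro _ a (ex_intro _ b (conj ab (conj Ha Hb)))).
  apply: (@prefix_inf_nth _ c0) => k hk.
  by rewrite hn // add0n HN //; slia.
move=> [x [Lx Px]] u [a [b [ab [Ha Hb]]]].
have H := @nth_prefix_inf _ c0 _ _ Px.
move/(infix_occ c0): Ha => [i Hi]; move/(infix_occ c0): Hb => [j Hj].
have Pu : prefix_inf u x.
  apply: Lx; exists a, b; split => //; split.
    exact: factor_of_occ H Hi.
  exact: factor_of_occ H Hj.
apply/(prefix_occ c0).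
have hs : size u <= size w by case: Hi => /= hb _; slia.
split; first by rewrite add0n.
move=> k hk; rewrite add0n H; last slia.
by rewrite (@nth_prefix_inf _ c0 _ _ Pu).
Qed.
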